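(* Let $G<\operatorname{Aut}(T)$ be the group generated by the automorphisms $a,b,c$ of the $6$-ary rooted tree $T=\{1,\dots,6\}^*$ defined by $a=\langle\!\langle b^{-1},1,b,c^{-1},1,c\rangle\!\rangle(13)(25)(46)$, $b=\langle\!\langle b,b^{-1},1,c,c^{-1},1\rangle\!\rangle(2356)$, $c=(123)(456)$. Then $G$ is regular branch over the subgroup $H=\langle [b^2,c]^g : g\in G\rangle$.
   Context: $T$ is the tree of finite words over $X=\{1,\dots,6\}$; automorphisms act on the right, so $[g,h]=g^{-1}h^{-1}gh$ and $h^g=g^{-1}hg$. The wreath recursion $g=\langle\!\langle g_1,\dots,g_6\rangle\!\rangle\sigma$ means $(xv)^g=x^\sigma v^{g_x}$; it defines the homomorphism $\psi\colon G\to G^X\rtimes\operatorname{Sym}(X)$, $g\mapsto\langle\!\langle g|_1,\dots,g|_6\rangle\!\rangle\sigma_g$. A self-similar group $G$ is regular branch over a subgroup $H$ if $H$ has finite index in $G$ and $H^X=H\times\cdots\times H$ (6 factors, viewed as elements with trivial permutation) is contained in $\psi(H)$. *)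

(* Defs.v *)
From Stdlib Require List.
From mathcomp Require Import all_boot.
Set Implicit Arguments. Unset Strict Implicit. Unset Printing Implicit Defensive.

(* Alphabet X = {1,...,6} is 'I_6, letter k (1-based) is the ordinal k-1.
   Vertices of the tree T are words seq 'I_6. *)
Definition lab (k : nat) : 'I_6 := Ordinal (ltn_pmod k.-1 (isT : 0 < 6)).

Inductive gen := A | B | C | Ai | Bi | Ci.
Definition word := seq gen.

Definition inv_letter (g : gen) : gen :=
  match g with A => Ai | B => Bi | C => Ci | Ai => A | Bi => B | Ci => C end.
Definition inv_word (w : word) : word := rev (map inv_letter w).

(* Permutation sigma_g, given as the 1-based list of images of 1..6
   (right action, x^sigma). a=(13)(25)(46), b=(2356), c=(123)(456). *)
Definition perm_table (g : gen) : seq nat :=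
  match g with
  | A  => [:: 3; 5; 1; 6; 2; 4]
  | B  => [:: 1; 3; 5; 4; 6; 2]
  | C  => [:: 2; 3; 1; 5; 6; 4]
  | Ai => [:: 3; 5; 1; 6; 2; 4]
  | Bi => [:: 1; 6; 2; 4; 3; 5]
  | Ci => [:: 3; 1; 2; 6; 4; 5]
  end.
Definition sigma (g : gen) (x : 'I_6) : 'I_6 := lab (nth 1 (perm_table g) x).

Definition sec_pos (g : gen) (x : 'I_6) : word :=
  match g with
  | A => nth [::] [:: [:: Bi]; [::]; [:: B]; [:: Ci]; [::]; [:: C]] x
  | B => nth [::] [:: [:: B]; [:: Bi]; [::]; [:: C]; [:: Ci]; [::]] x
  | _ => [::]
  end.
(* For g = <<g_y>> sigma, (x v)^(g^-1) = x^(sigma^-1) v^((g_(x^(sigma^-1)))^-1). *)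
Definition sec (g : gen) (x : 'I_6) : word :=
  match g with
  | A | B | C => sec_pos g x
  | Ai | Bi | Ci => inv_word (sec_pos (inv_letter g) (sigma g x))
  end.

(* Image of the first letter and section of a word w = g1 g2 ... gn
   (right action: (gh)|_x = g|_x h|_(x^g)). *)
Fixpoint step (w : word) (x : 'I_6) : 'I_6 * word :=
  match w with
  | [::] => (x, [::])
  | g :: w' => let p := step w' (sigma g x) in (p.1, sec g x ++ p.2)
  end.

Fixpoint act (w : word) (v : seq 'I_6) {struct v} : seq 'I_6 :=
  match v with
  | [::] => [::]
  | x :: v' => (step w x).1 :: act (step w x).2 v'
  end.

Definition act_eq (w1 w2 : word) : Prop := forall v, act w1 v = act w2 v.

Definition in_gen (S : word -> Prop) (w : word) : Prop :=
  exists s : seq (word * bool),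
    (forall p, List.In p s -> S p.1) /\
    act_eq w (flatten [seq (if p.2 then p.1 else inv_word p.1) | p <- s]).

Definition conj_word (h g : word) : word := inv_word g ++ h ++ g.
Definition comm_word (g h : word) : word := inv_word g ++ inv_word h ++ g ++ h.

Definition inH (w : word) : Prop :=
  in_gen (fun u => exists g : word, u = conj_word (comm_word [:: B; B] [:: C]) g) w.

Definition finite_index (P : word -> Prop) : Prop :=
  exists reps : seq word, forall w : word,
    exists r, List.In r reps /\ P (w ++ inv_word r).

Definition regular_branch_over (P : word -> Prop) : Prop :=
  finite_index P /\
  forall hs : 'I_6 -> word, (forall x, P (hs x)) ->
    exists h : word, P h /\
      forall (x : 'I_6) (v : seq 'I_6), act h (x :: v) = x :: act (hs x) v.

(* Main.v *)
From HB Require Import structures.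
Require Import Defs.
From mathcomp Require Import all_boot.
Set Implicit Arguments. Unset Strict Implicit. Unset Printing Implicit Defensive.

Definition gen_eqb (x y : gen) : bool :=
  match x, y with
  | A, A | B, B | C, C | Ai, Ai | Bi, Bi | Ci, Ci => true
  | _, _ => false end.
Lemma gen_eqP : Equality.axiom gen_eqb.
Proof. by case; case; constructor. Qed.
HB.instance Definition _ := hasDecEq.Build gen gen_eqP.

Definition gens6 : seq gen := [:: A; B; C; Ai; Bi; Ci].
Lemma mem_gens6 g : g \in gens6. Proof. by case: g. Qed.
Definition ords : seq 'I_6 := [seq lab k | k <- iota 1 6].
Lemma mem_ords x : x \in ords.
Proof.
apply/mapP; exists x.+1; first by rewrite mem_iota /= add1n ltnS ltn_ord.
by apply/val_inj; rewrite /= modn_small.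
Qed.
Lemma uniq_ords : uniq ords.
Proof.
rewrite -(map_inj_uniq val_inj).
by vm_compute.
Qed.

Lemma inv_letterK : involutive inv_letter. Proof. by case. Qed.
Lemma inv_word_cat u w : inv_word (u ++ w) = inv_word w ++ inv_word u.
Proof. by rewrite /inv_word map_cat rev_cat. Qed.
Lemma inv_wordK : involutive inv_word.
Proof. by move=> w; rewrite /inv_word map_rev revK (mapK inv_letterK). Qed.
Lemma inv_word_cons g w : inv_word (g :: w) = inv_word w ++ [:: inv_letter g].
Proof. by rewrite -cat1s inv_word_cat. Qed.
Lemma inv_word_rcons w g : inv_word (rcons w g) = inv_letter g :: inv_word w.
Proof. by rewrite /inv_word map_rcons rev_rcons. Qed.
Lemma inv_word_nil : inv_word [::] = [::]. Proof. by []. Qed.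

Lemma step_cat u w x :
  step (u ++ w) x = ((step w (step u x).1).1, (step u x).2 ++ (step w (step u x).1).2).
Proof.
elim: u x => [|g u IH] x /=; first by case: (step w x).
by rewrite IH catA.
Qed.

Lemma act_cat u w v : act (u ++ w) v = act w (act u v).
Proof.
elim: v u w => [|x v IH] u w //=.
by rewrite step_cat /= IH.
Qed.

Lemma act_nil v : act [::] v = v.
Proof. elim: v => [|x v IH] //=. by rewrite IH. Qed.

Lemma act_cons_shape w x v : act w (x :: v) = (step w x).1 :: act (step w x).2 v.
Proof. by []. Qed.

Lemma sigma_invK_all :
  all (fun g => all (fun x => sigma (inv_letter g) (sigma g x) == x) ords) gens6.
Proof. by vm_compute. Qed.
Lemma sigma_invK g x : sigma (inv_letter g) (sigma g x) = x.
Proof.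
by move/allP: sigma_invK_all => /(_ g (mem_gens6 g)) /allP /(_ x (mem_ords x)) /eqP.
Qed.

Definition pair_ok (s : word) : bool :=
  (s == [::]) || ((size s == 2) && (nth A s 1 == inv_letter (nth A s 0))).
Lemma sec_pair_all :
  all (fun g => all (fun x => pair_ok (sec g x ++ sec (inv_letter g) (sigma g x))) ords) gens6.
Proof. by vm_compute. Qed.

Lemma act_pair g v : act [:: g; inv_letter g] v = v.
Proof.
elim: v g => [|x v IH] g //=.
rewrite sigma_invK cats0; congr (_ :: _).
move/allP: sec_pair_all => /(_ g (mem_gens6 g)) /allP /(_ x (mem_ords x)).
case/orP=> [/eqP -> | /andP [/eqP]]; first exact: act_nil.
case: (_ ++ _) => [|h [|h' [|]]] //= _ /eqP ->.
exact: IH.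
Qed.

Lemma act_cancel u w g v : act (u ++ g :: inv_letter g :: w) v = act (u ++ w) v.
Proof.
by rewrite !act_cat (_ : g :: inv_letter g :: w = [:: g; inv_letter g] ++ w) // act_cat act_pair.
Qed.

Lemma act_invK w v : act (inv_word w) (act w v) = v.
Proof.
elim: w v => [|g w IH] v; first by rewrite /= !act_nil.
rewrite inv_word_cons (_ : g :: w = [:: g] ++ w) // !act_cat IH -act_cat.
exact: act_pair.
Qed.

Lemma act_Kinv w v : act w (act (inv_word w) v) = v.
Proof. by rewrite -{1}(inv_wordK w) act_invK. Qed.

Lemma step_inj t z z' : (step t z).1 = (step t z').1 -> z = z'.
Proof.
move=> E.
have := act_invK t [:: z]; have := act_invK t [:: z'].
by rewrite /= E => -> [].
Qed.

Lemma act_eq_refl w : act_eq w w. Proof. by []. Qed.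
Lemma act_eq_sym u w : act_eq u w -> act_eq w u. Proof. by move=> E v. Qed.
Lemma act_eq_trans u w z : act_eq u w -> act_eq w z -> act_eq u z.
Proof. by move=> E1 E2 v; rewrite E1 E2. Qed.
Lemma act_eq_cat a a' b b' : act_eq a a' -> act_eq b b' -> act_eq (a ++ b) (a' ++ b').
Proof. by move=> E1 E2 v; rewrite !act_cat E1 E2. Qed.
Lemma act_eq_inv a a' : act_eq a a' -> act_eq (inv_word a) (inv_word a').
Proof.
move=> E v.
by rewrite -{1}(act_Kinv a' v) -E act_invK.
Qed.
Lemma act_eq_winv w : act_eq (w ++ inv_word w) [::].
Proof. by move=> v; rewrite act_cat act_invK act_nil. Qed.
Lemma act_eq_invw w : act_eq (inv_word w ++ w) [::].
Proof. by move=> v; rewrite act_cat act_Kinv act_nil. Qed.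
Lemma act_eq_cancel u w g : act_eq (u ++ g :: inv_letter g :: w) (u ++ w).
Proof. by move=> v; rewrite act_cancel. Qed.

Definition rstep (st : word) (g : gen) : word :=
  if st is h :: t then (if h == inv_letter g then t else g :: st) else [:: g].
Definition reduce (w : word) : word := rev (foldl rstep [::] w).

Lemma reduce_foldl w st v : act (rev (foldl rstep st w)) v = act (rev st ++ w) v.
Proof.
elim: w st => [|g w IH] st /=; first by rewrite cats0.
rewrite IH; case: st => [|h t] //=.
case: eqP => [-> | _].
  by rewrite rev_cons cat_rcons -{2}(inv_letterK g) act_cancel.
by rewrite rev_cons cat_rcons.
Qed.

Lemma act_reduce w : act_eq (reduce w) w.
Proof. by move=> v; rewrite /reduce reduce_foldl. Qed.

Definition check_triv (L : seq word) : bool :=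
  all (fun w => all (fun x => ((step w x).1 == x) &&
         ((reduce (step w x).2 == [::]) || (reduce (step w x).2 \in L))) ords) L.

Lemma check_triv_sound L : check_triv L -> forall v w, w \in L -> act w v = v.
Proof.
move=> /allP H; elim=> [|x v IH] w wL //=.
move/allP: (H w wL) => /(_ x (mem_ords x)) /andP [/eqP -> Hs].
congr (_ :: _); rewrite -act_reduce.
case/orP: Hs => [/eqP -> | Hs]; [exact: act_nil | exact: IH].
Qed.

Fixpoint clos (n : nat) (todo seen : seq word) : seq word :=
  if n is n'.+1 then
    if todo is w :: todo' then
      let nw := undup [seq reduce (step w x).2 | x <- ords] in
      let nw := [seq u <- nw | (u != [::]) && (u \notin seen)] in
      clos n' (nw ++ todo') (nw ++ seen)
    else seen
  else seen.

Definition triv_word (w : word) : bool :=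
  let r := reduce w in
  (r == [::]) || (let L := clos 4096 [:: r] [:: r] in (r \in L) && check_triv L).

Lemma triv_word_sound w : triv_word w -> act_eq w [::].
Proof.
rewrite /triv_word => H v; rewrite -act_reduce act_nil.
case/orP: H => [/eqP -> | /andP [rL Hc]]; first exact: act_nil.
exact: check_triv_sound Hc v _ rL.
Qed.

Lemma triv_act_eq u w : triv_word (u ++ inv_word w) -> act_eq u w.
Proof.
move/triv_word_sound => E v.
by rewrite -(act_Kinv w (act u v)) -[act (inv_word w) (act u v)]act_cat E act_nil.
Qed.

Definition Real (h : word) (x : 'I_6) (u : word) : Prop :=
  (forall v, act h (x :: v) = x :: act u v) /\
  (forall y v, y != x -> act h (y :: v) = y :: v).

Lemma Real_eq h x u u' : Real h x u -> act_eq u u' -> Real h x u'.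
Proof. by case=> H1 H2 E; split=> // v; rewrite H1 E. Qed.

Lemma Real_nil x : Real [::] x [::].
Proof. by split=> *; rewrite !act_nil. Qed.

Lemma Real_cat h1 h2 x u1 u2 : Real h1 x u1 -> Real h2 x u2 -> Real (h1 ++ h2) x (u1 ++ u2).
Proof.
case=> A1 B1 [A2 B2]; split=> [v|y v ny]; rewrite act_cat.
  by rewrite A1 A2 act_cat.
by rewrite B1 // B2.
Qed.

Lemma Real_inv h x u : Real h x u -> Real (inv_word h) x (inv_word u).
Proof.
case=> H1 H2.
have key z v : act (inv_word h) (z :: v) =
   if z == x then x :: act (inv_word u) v else z :: v.
  have E := act_Kinv h (z :: v).
  move: E; rewrite act_cons_shape.
  set p0 := (step (inv_word h) z).1; set p' := act (step (inv_word h) z).2 v.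
  case: (eqVneq p0 x) => [e | ne].
    rewrite e H1 => -[<- E2].
    by rewrite eqxx -E2 act_invK.
  rewrite H2 // => -[<- <-].
  by rewrite (negbTE ne).
split=> [v | y v ny]; first by rewrite key eqxx.
by rewrite key (negbTE ny).
Qed.

Definition conj_w := conj_word.

Lemma Real_conj h x u t :
  Real h x u -> Real (conj_word h t) (step t x).1 (conj_word u (step t x).2).
Proof.
case=> H1 H2.
set y := (step t x).1; set s := (step t x).2.
have key z v : act (conj_word h t) (z :: v) =
   if z == y then y :: act (conj_word u s) v else z :: v.
  rewrite /conj_word !act_cat.
  have E := act_Kinv t (z :: v).
  move: E; rewrite [act (inv_word t) _]act_cons_shape.
  set p0 := (step (inv_word t) z).1; set p' := act (step (inv_word t) z).2 v.
  rewrite act_cons_shape => -[Ez Ev].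
  case: (eqVneq p0 x) => [e | ne].
    have zy : z = y by rewrite -Ez e.
    rewrite zy eqxx e H1 act_cons_shape -/y -/s.
    rewrite e -/s in Ev.
    by rewrite -Ev act_invK.
  have zy : z != y.
    apply/eqP => zy; move: Ez; rewrite zy => /step_inj; exact/eqP.
  rewrite (negbTE zy) H2 //.
  by rewrite act_cons_shape Ez Ev.
split=> [v | z v nz]; first by rewrite key eqxx.
by rewrite key (negbTE nz).
Qed.

Definition realb (h : word) (x : 'I_6) : bool :=
  all (fun y => ((step h y).1 == y) && ((y == x) || triv_word (step h y).2)) ords.

Lemma realb_sound h x : realb h x -> Real h x (step h x).2.
Proof.
move/allP=> H; split=> [v | y v ny].
  by move/andP: (H x (mem_ords x)) => [/eqP E _] /=; rewrite E.
move/andP: (H y (mem_ords y)) => [/eqP E]; rewrite (negbTE ny) /= => /triv_word_sound T.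
by rewrite /= E T act_nil.
Qed.

Record normalP (P : word -> Prop) : Prop := NormalP {
  nP_eq : forall u w, act_eq u w -> P u -> P w;
  nP_nil : P [::];
  nP_cat : forall u w, P u -> P w -> P (u ++ w);
  nP_inv : forall u, P u -> P (inv_word u);
  nP_conj : forall u g, P u -> P (conj_word u g) }.

Definition cgP (P : word -> Prop) (w1 w2 : word) : Prop := P (w1 ++ inv_word w2).

Section Cong.
Variable P : word -> Prop.
Hypothesis nP : normalP P.

Lemma cg_act u w : act_eq u w -> cgP P u w.
Proof.
move=> E; apply: (nP_eq nP _ (nP_nil nP)) => v.
by rewrite act_nil act_cat E act_invK.
Qed.

Lemma cg_refl u : cgP P u u.
Proof. exact: cg_act. Qed.

Lemma cg_sym u w : cgP P u w -> cgP P w u.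
Proof.
by move/(nP_inv nP); rewrite /cgP inv_word_cat inv_wordK.
Qed.

Lemma cg_trans u w z : cgP P u w -> cgP P w z -> cgP P u z.
Proof.
move=> H1 H2; apply: (nP_eq nP _ (nP_cat nP H1 H2)) => v.
by rewrite !act_cat act_Kinv.
Qed.

Lemma cg_ctx p s u w : cgP P u w -> cgP P (p ++ u ++ s) (p ++ w ++ s).
Proof.
move=> H; have := nP_conj nP (inv_word p) H.
apply: (nP_eq nP) => v.
rewrite /conj_word inv_wordK !inv_word_cat !act_cat.
by rewrite act_invK.
Qed.

Lemma cg_inv u w : cgP P u w -> cgP P (inv_word u) (inv_word w).
Proof.
move/cg_sym=> H; have := nP_conj nP u H.
apply: (nP_eq nP) => v.
rewrite /conj_word /cgP inv_wordK !act_cat.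
by rewrite act_Kinv.
Qed.

Lemma cg_P u : cgP P u [::] -> P u.
Proof. by rewrite /cgP inv_word_nil cats0. Qed.
End Cong.

Inductive just := JAx of nat & bool & bool | JTriv.
Definition stepT := (nat * nat * word * just)%type.

Definition dflt : word * word := ([::], [::]).
Definition ax_of (ax : seq (word * word)) (n : nat) (r i : bool) : word * word :=
  let p := nth dflt ax n in
  let p := if r then (p.2, p.1) else p in
  if i then (inv_word p.1, inv_word p.2) else p.

Definition apply_step (ax : seq (word * word)) (w : word) (st : stepT) : option word :=
  let: (pos, len, v, j) := st in
  let u := take len (drop pos w) in
  let ok := match j with
            | JAx n r i => ((ax_of ax n r i).1 == u) && ((ax_of ax n r i).2 == v)
            | JTriv => triv_word (u ++ inv_word v)
            end in
  if ok then Some (take pos w ++ v ++ drop (pos + len) w) else None.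

Fixpoint run (ax : seq (word * word)) (w : word) (sts : seq stepT) : option word :=
  if sts is st :: sts' then
    (if apply_step ax w st is Some w' then run ax w' sts' else None)
  else Some w.

Fixpoint check_lemmas (ax : seq (word * word)) (ls : seq (word * word * seq stepT))
  : option (seq (word * word)) :=
  if ls is (u, v, sts) :: ls' then
    (if run ax u sts == Some v then check_lemmas (rcons ax (u, v)) ls' else None)
  else Some ax.

Definition valid (P : word -> Prop) (ax : seq (word * word)) :=
  forall n, cgP P (nth dflt ax n).1 (nth dflt ax n).2.

Section Check.
Variable P : word -> Prop.
Hypothesis nP : normalP P.

Lemma valid_ax_of ax n r i : valid P ax -> cgP P (ax_of ax n r i).1 (ax_of ax n r i).2.
Proof.
move=> V; rewrite /ax_of.
case: i; case: r => /=.
- have h1 := V n. have h2 := cg_sym nP h1. exact (cg_inv nP h2).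
- have h1 := V n. exact (cg_inv nP h1).
- have h1 := V n. exact (cg_sym nP h1).
- exact: V n.
Qed.

Lemma apply_step_sound ax w st w' :
  valid P ax -> apply_step ax w st = Some w' -> cgP P w w'.
Proof.
case: st => [[[pos len] v] j] V /=.
set u := take len (drop pos w).
have Ew : w = take pos w ++ u ++ drop (pos + len) w.
  by rewrite /u addnC -drop_drop !cat_take_drop.
have H : (match j with
            | JAx n r i => ((ax_of ax n r i).1 == u) && ((ax_of ax n r i).2 == v)
            | JTriv => triv_word (u ++ inv_word v)
            end) -> cgP P u v.
  case: j => [n r i | ].
    by case/andP=> /eqP <- /eqP <-; exact: valid_ax_of.
  by move/triv_act_eq => E; exact (cg_act nP E).
case: ifP => // ok [<-].
rewrite {1}Ew; apply: (cg_ctx nP).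
exact: H.
Qed.

Lemma run_sound ax w sts w' : valid P ax -> run ax w sts = Some w' -> cgP P w w'.
Proof.
move=> V; elim: sts w => [|st sts IH] w /=.
  by move=> [<-]; exact (cg_refl nP w).
case E: apply_step => [w1|] // /IH H.
exact (cg_trans nP (apply_step_sound V E) H).
Qed.

Lemma check_lemmas_sound ax ls ax' :
  valid P ax -> check_lemmas ax ls = Some ax' -> valid P ax'.
Proof.
elim: ls ax => [|[[u v] sts] ls IH] ax V /=; first by move=> [<-].
case: eqP => // E; apply: IH => n.
rewrite nth_rcons; case: ltnP => _; first exact: V.
case: eqP => _ /=; last exact (cg_refl nP _).
exact (run_sound V E).
Qed.

Lemma valid_mem ax p : valid P ax -> p \in ax -> cgP P p.1 p.2.
Proof.
by move=> V pax; rewrite -(nth_index dflt pax); exact: V.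
Qed.
End Check.

Definition kk : word := comm_word [:: B; B] [:: C].
Definition Sk (u : word) : Prop := exists g : word, u = conj_word kk g.
Definition fpair (p : word * bool) : word := if p.2 then p.1 else inv_word p.1.

Lemma inv_flatten s :
  inv_word (flatten (map fpair s)) =
  flatten (map fpair (rev (map (fun p => (p.1, ~~ p.2)) s))).
Proof.
elim: s => [|p s IH] //=.
rewrite inv_word_cat IH rev_cons map_rcons flatten_rcons; congr (_ ++ _).
by case: p => u [] //=; rewrite inv_wordK.
Qed.

Lemma conj_cat a b g : act_eq (conj_word (a ++ b) g) (conj_word a g ++ conj_word b g).
Proof. by move=> v; rewrite /conj_word !act_cat act_invK. Qed.

Lemma conj_fpair p g : conj_word (fpair p) g = fpair (conj_word p.1 g, p.2).
Proof.
case: p => u [] //.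
by rewrite /fpair /= /conj_word !inv_word_cat inv_wordK catA.
Qed.

Lemma conj_flatten s g :
  act_eq (conj_word (flatten (map fpair s)) g)
         (flatten (map fpair (map (fun p => (conj_word p.1 g, p.2)) s))).
Proof.
elim: s => [|p s IH] /=.
  by move=> v; rewrite /conj_word /= act_cat act_Kinv act_nil.
apply: act_eq_trans (conj_cat _ _ _) _.
rewrite conj_fpair; exact: act_eq_cat.
Qed.

Lemma In_mem (T : eqType) (x : T) s : List.In x s <-> x \in s.
Proof.
elim: s => [|y s IH] //=; rewrite in_cons; split.
  by case=> [-> | /IH ->]; rewrite ?eqxx ?orbT.
by case/orP=> [/eqP -> | /IH]; [left | right].
Qed.

Lemma In_cat_or (T : Type) (x : T) s1 s2 : List.In x (s1 ++ s2) -> List.In x s1 \/ List.In x s2.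
Proof. exact: List.in_app_or. Qed.

Lemma normal_inH : normalP inH.
Proof.
split.
- move=> u w E [s [HS E2]]; exists s; split=> //.
  exact: act_eq_trans (act_eq_sym E) E2.
- by exists [::]; split.
- move=> u w [s1 [H1 E1]] [s2 [H2 E2]]; exists (s1 ++ s2); split.
    move=> p Hp; have := proj1 (In_mem p _) Hp; rewrite mem_cat.
    by case/orP=> /(proj2 (In_mem p _)); [apply: H1 | apply: H2].
  by rewrite map_cat flatten_cat; exact: act_eq_cat.
- move=> u [s [HS E]]; exists (rev (map (fun p => (p.1, ~~ p.2)) s)); split.
    move=> p Hp; have := proj1 (In_mem p _) Hp.
    rewrite mem_rev => /mapP [q Hq ->]; exact: (HS q (proj2 (In_mem q s) Hq)).
  rewrite -inv_flatten; exact: act_eq_inv.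
- move=> u g [s [HS E]]; exists (map (fun p => (conj_word p.1 g, p.2)) s); split.
    move=> p Hp; have := proj1 (In_mem p _) Hp.
    move=> /mapP [q Hq ->] /=.
    have [g0 ->] := HS q (proj2 (In_mem q s) Hq).
    by exists (g0 ++ g); rewrite /conj_word inv_word_cat !catA.
  apply: act_eq_trans (conj_flatten s g).
  by move=> v; rewrite /conj_word !act_cat E.
Qed.

Lemma inH_k : inH kk.
Proof.
exists [:: (kk, true)]; split.
  by move=> p [<- | []]; exists [::]; rewrite /conj_word /= ?cats0.
by move=> v; rewrite /= ?cats0.
Qed.

Definition x0 : 'I_6 := ord0.

Definition t0 (s : gen) : word :=
  match s with
  | A | Ai => [:: C; B; B; B; B; Ci]
  | B => [:: B]
  | Bi => [:: Bi]
  | C => [:: C; Bi; Bi; Bi; C]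
  | Ci => [:: Ci; B; B; B; Ci]
  end.

Lemma t0_all : all (fun s => ((step (t0 s) x0).1 == x0) &&
                  triv_word ((step (t0 s) x0).2 ++ inv_word [:: s])) gens6.
Proof. by vm_compute. Qed.

Lemma t0_ok s : (step (t0 s) x0).1 = x0 /\ act_eq (step (t0 s) x0).2 [:: s].
Proof.
move/allP: t0_all => /(_ s (mem_gens6 s)) /andP [/eqP -> /triv_act_eq E].
by split.
Qed.

Lemma act_eq_conj w a b : act_eq a b -> act_eq (conj_word w a) (conj_word w b).
Proof.
move=> E; apply: act_eq_cat; first exact: act_eq_inv.
by apply: act_eq_cat.
Qed.

Lemma conj_rcons u g s : conj_word u (rcons g s) = conj_word (conj_word u g) [:: s].
Proof.
by rewrite /conj_word inv_word_rcons /= -cats1 !catA.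
Qed.

Definition R0 (u : word) : Prop := exists h, inH h /\ Real h x0 u.

Lemma normal_R0 : normalP R0.
Proof.
have nH := normal_inH.
split.
- move=> u w E [h [Hh R]]; exists h; split=> //; exact: Real_eq E.
- by exists [::]; split; [exact (nP_nil nH)| exact: Real_nil].
- move=> u w [h1 [H1 R1]] [h2 [H2 R2]]; exists (h1 ++ h2); split.
    exact (nP_cat nH H1 H2).
  exact: Real_cat.
- move=> u [h [Hh R]]; exists (inv_word h); split; [exact (nP_inv nH Hh)| exact: Real_inv].
- move=> u g; elim/last_ind: g => [|g s IH] Ru.
    by move: Ru; rewrite /conj_word /= cats0.
  rewrite conj_rcons; case: (IH Ru) => h [Hh R].
  exists (conj_word h (t0 s)); split; first exact (nP_conj nH (t0 s) Hh).
  have R' := Real_conj (t0 s) R.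
  case: (t0_ok s) => E1 E2; rewrite E1 in R'.
  apply: Real_eq R' _; exact: act_eq_conj.
Qed.

Lemma H_sub_R0 : R0 kk -> forall u, inH u -> R0 u.
Proof.
move=> Rk u [s [HS E]].
have nR := normal_R0.
apply: (nP_eq nR (act_eq_sym E)).
elim: s HS {E} => [|p s IH] HS /=; first exact (nP_nil nR).
apply: (nP_cat nR); last by apply: IH => q Hq; apply: HS; right.
have [g Eg] := HS p (or_introl erefl).
have Rp : R0 p.1 by rewrite Eg; exact (nP_conj nR g Rk).
by move: Rp; rewrite /fpair; case: p.2 => //= Rp; exact (nP_inv nR Rp).
Qed.

Definition tau (x : 'I_6) : word :=
  nth [::] [:: [::]; [:: C]; [:: C; C]; [:: C; A; C; C]; [:: C; A]; [:: C; A; C]] x.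

Lemma tau_all : all (fun x => (step (tau x) x0).1 == x) ords.
Proof. by vm_compute. Qed.

Lemma tau_ok x : (step (tau x) x0).1 = x.
Proof. by move/allP: tau_all => /(_ x (mem_ords x)) /eqP. Qed.

Lemma realize_at : R0 kk -> forall x u, inH u -> exists h, inH h /\ Real h x u.
Proof.
move=> Rk x u Hu.
set sg := (step (tau x) x0).2.
have Hu' : inH (conj_word u (inv_word sg)) by exact (nP_conj normal_inH (inv_word sg) Hu).
have [h [Hh R]] := H_sub_R0 Rk Hu'.
exists (conj_word h (tau x)); split; first exact (nP_conj normal_inH (tau x) Hh).
have R' := Real_conj (tau x) R; rewrite tau_ok -/sg in R'.
apply: Real_eq R' _ => v.
by rewrite /conj_word inv_wordK !act_cat !act_Kinv.
Qed.

Lemma act_flatten (f u : 'I_6 -> word) (Hf : forall x, Real (f x) x (u x)) l :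
  uniq l -> forall (x : 'I_6) (v : seq 'I_6),
  act (flatten (map f l)) (x :: v) = if x \in l then x :: act (u x) v else x :: v.
Proof.
elim: l => [|y l IH]; first by move=> _ x v; rewrite /= act_nil.
move=> /= /andP [yl ul] x v.
change (act (f y ++ flatten (map f l)) (x :: v) = (if x \in y :: l then x :: act (u x) v else x :: v)).
rewrite act_cat in_cons.
case: (Hf y) => H1 H2.
case: (eqVneq x y) => [-> | ne].
  by rewrite orTb H1 IH // (negbTE yl).
by rewrite orFb H2 // IH.
Qed.

Lemma branch_part : R0 kk -> forall hs : 'I_6 -> word, (forall x, inH (hs x)) ->
    exists h : word, inH h /\
      forall (x : 'I_6) (v : seq 'I_6), act h (x :: v) = x :: act (hs x) v.
Proof.
move=> Rk hs Hhs.
have E x : exists h, inH h /\ Real h x (hs x) by exact: realize_at Rk x (hs x) (Hhs x).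
have [f Hf] := fin_all_exists E.
exists (flatten (map f ords)); split.
  elim: ords => [|y l IH] /=; first exact (nP_nil normal_inH).
  by apply: (nP_cat normal_inH); [case: (Hf y) | ].
move=> x v; rewrite (act_flatten (u := hs)) ?uniq_ords ?mem_ords //.
by move=> y; case: (Hf y).
Qed.

Definition lemsH : seq (word * word * seq stepT) := [::
  ([:: B; B; C], [:: C; B; B], [:: (0, 0, [:: C; B; B; Bi; Bi; Ci], JTriv);
    (3, 6, [::], JAx 0 false false)]);
  ([:: B; B; B; B; B; B], [::], [:: (6, 0, [:: C; C; C], JTriv);
    (4, 3, [:: C; B; B], JAx 1 false false);
    (2, 3, [:: C; B; B], JAx 1 false false);
    (5, 3, [:: C; B; B], JAx 1 false false);
    (0, 9, [::], JTriv)]);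
  ([:: Bi], [:: B; B; B; B; B], [:: (1, 0, [:: B; B; B; B; B; B], JAx 2 true false);
    (0, 2, [::], JTriv)]);
  ([:: A], [:: C; B], [:: (0, 1, [:: C; B], JTriv)]);
  ([:: B], [:: B], [:: (1, 0, [::], JTriv)]);
  ([:: C], [:: C], [:: (1, 0, [::], JTriv)]);
  ([:: Ai], [:: C; B], [:: (0, 1, [:: C; B], JTriv)]);
  ([:: Bi], [:: B; B; B; B; B], [:: (0, 1, [:: B; B; B; B; B], JAx 3 false false)]);
  ([:: Ci], [:: C; C], [:: (0, 1, [:: C; C], JTriv)]);
  ([:: B; A], [:: C; C], [:: (1, 1, [:: C; B], JAx 4 false false);
    (0, 2, [:: C; C; Bi], JTriv);
    (2, 1, [:: B; B; B; B; B], JAx 3 false false);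
    (2, 6, [::], JAx 2 false false)]);
  ([:: B; B], [:: B; B], [:: (0, 1, [:: B], JAx 5 false false)]);
  ([:: B; C], [:: C; C; B; B; B; B; B], [:: (0, 2, [:: C; C; Bi], JTriv);
    (2, 1, [:: B; B; B; B; B], JAx 3 false false)]);
  ([:: B; Ai], [:: C; C], [:: (1, 1, [:: C; B], JAx 7 false false);
    (0, 2, [:: C; C; Bi], JTriv);
    (2, 1, [:: B; B; B; B; B], JAx 3 false false);
    (2, 6, [::], JAx 2 false false)]);
  ([:: B; Bi], [::], [:: (1, 1, [:: B; B; B; B; B], JAx 3 false false);
    (0, 6, [::], JAx 2 false false)]);
  ([:: B; Ci], [:: C; B; B; B], [:: (1, 1, [:: C; C], JAx 9 false false);
    (0, 2, [:: C; C; Bi], JTriv);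
    (2, 1, [:: B; B; B; B; B], JAx 3 false false);
    (5, 3, [:: C; B; B], JAx 1 false false);
    (3, 3, [:: C; B; B], JAx 1 false false);
    (2, 2, [:: C; C; Bi], JTriv);
    (4, 1, [:: B; B; B; B; B], JAx 3 false false);
    (1, 3, [::], JTriv);
    (1, 6, [::], JAx 2 false false)]);
  ([:: B; B; A], [:: C; B; B; B], [:: (2, 1, [:: C; B], JAx 4 false false);
    (0, 3, [:: C; B; B], JAx 1 false false)]);
  ([:: B; B; B], [:: B; B; B], [:: (0, 1, [:: B], JAx 5 false false)]);
  ([:: B; B; C], [:: C; B; B], [:: (0, 3, [:: C; B; B], JAx 1 false false)]);
  ([:: B; B; Ai], [:: C; B; B; B], [:: (2, 1, [:: C; B], JAx 7 false false);
    (0, 3, [:: C; B; B], JAx 1 false false)]);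
  ([:: B; B; Bi], [:: B], [:: (2, 1, [:: B; B; B; B; B], JAx 3 false false);
    (0, 6, [::], JAx 2 false false)]);
  ([:: B; B; Ci], [:: C; C; B; B], [:: (2, 1, [:: C; C], JAx 9 false false);
    (0, 3, [:: C; B; B], JAx 1 false false);
    (1, 3, [:: C; B; B], JAx 1 false false)]);
  ([:: B; B; B; A], [:: C; C; B; B], [:: (3, 1, [:: C; B], JAx 4 false false);
    (1, 3, [:: C; B; B], JAx 1 false false);
    (0, 2, [:: C; C; Bi], JTriv);
    (2, 1, [:: B; B; B; B; B], JAx 3 false false);
    (2, 6, [::], JAx 2 false false)]);
  ([:: B; B; B; B], [:: B; B; B; B], [:: (0, 1, [:: B], JAx 5 false false)]);
  ([:: B; B; B; C], [:: C; C; B], [:: (1, 3, [:: C; B; B], JAx 1 false false);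
    (0, 2, [:: C; C; Bi], JTriv);
    (2, 1, [:: B; B; B; B; B], JAx 3 false false);
    (2, 6, [::], JAx 2 false false)]);
  ([:: B; B; B; Ai], [:: C; C; B; B], [:: (3, 1, [:: C; B], JAx 7 false false);
    (1, 3, [:: C; B; B], JAx 1 false false);
    (0, 2, [:: C; C; Bi], JTriv);
    (2, 1, [:: B; B; B; B; B], JAx 3 false false);
    (2, 6, [::], JAx 2 false false)]);
  ([:: B; B; B; Bi], [:: B; B], [:: (3, 1, [:: B; B; B; B; B], JAx 3 false false);
    (0, 6, [::], JAx 2 false false)]);
  ([:: B; B; B; Ci], [:: C; B; B; B; B; B], [:: (3, 1, [:: C; C], JAx 9 false false);
    (1, 3, [:: C; B; B], JAx 1 false false);
    (2, 3, [:: C; B; B], JAx 1 false false);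
    (0, 2, [:: C; C; Bi], JTriv);
    (2, 1, [:: B; B; B; B; B], JAx 3 false false);
    (5, 3, [:: C; B; B], JAx 1 false false);
    (3, 3, [:: C; B; B], JAx 1 false false);
    (4, 6, [::], JAx 2 false false);
    (2, 2, [:: C; C; Bi], JTriv);
    (4, 1, [:: B; B; B; B; B], JAx 3 false false);
    (1, 3, [::], JTriv)]);
  ([:: B; B; B; B; A], [:: C; B; B; B; B; B], [:: (4, 1, [:: C; B], JAx 4 false false);
    (2, 3, [:: C; B; B], JAx 1 false false);
    (0, 3, [:: C; B; B], JAx 1 false false)]);
  ([:: B; B; B; B; B], [:: B; B; B; B; B], [:: (0, 1, [:: B], JAx 5 false false)]);
  ([:: B; B; B; B; C], [:: C; B; B; B; B], [:: (2, 3, [:: C; B; B], JAx 1 false false);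
    (0, 3, [:: C; B; B], JAx 1 false false)]);
  ([:: B; B; B; B; Ai], [:: C; B; B; B; B; B], [:: (4, 1, [:: C; B], JAx 7 false false);
    (2, 3, [:: C; B; B], JAx 1 false false);
    (0, 3, [:: C; B; B], JAx 1 false false)]);
  ([:: B; B; B; B; Bi], [:: B; B; B], [:: (4, 1, [:: B; B; B; B; B], JAx 3 false false);
    (0, 6, [::], JAx 2 false false)]);
  ([:: B; B; B; B; Ci], [:: C; C; B; B; B; B], [:: (4, 1, [:: C; C], JAx 9 false false);
    (2, 3, [:: C; B; B], JAx 1 false false);
    (0, 3, [:: C; B; B], JAx 1 false false);
    (3, 3, [:: C; B; B], JAx 1 false false);
    (1, 3, [:: C; B; B], JAx 1 false false)]);
  ([:: B; B; B; B; B; A], [:: C; C; B; B; B; B], [:: (5, 1, [:: C; B], JAx 4 false false);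
    (3, 3, [:: C; B; B], JAx 1 false false);
    (1, 3, [:: C; B; B], JAx 1 false false);
    (0, 2, [:: C; C; Bi], JTriv);
    (2, 1, [:: B; B; B; B; B], JAx 3 false false);
    (2, 6, [::], JAx 2 false false)]);
  ([:: B; B; B; B; B; B], [::], [:: (0, 6, [::], JAx 2 false false)]);
  ([:: B; B; B; B; B; C], [:: C; C; B; B; B], [:: (3, 3, [:: C; B; B], JAx 1 false false);
    (1, 3, [:: C; B; B], JAx 1 false false);
    (0, 2, [:: C; C; Bi], JTriv);
    (2, 1, [:: B; B; B; B; B], JAx 3 false false);
    (2, 6, [::], JAx 2 false false)]);
  ([:: B; B; B; B; B; Ai], [:: C; C; B; B; B; B], [:: (5, 1, [:: C; B], JAx 7 false false);
    (3, 3, [:: C; B; B], JAx 1 false false);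
    (1, 3, [:: C; B; B], JAx 1 false false);
    (0, 2, [:: C; C; Bi], JTriv);
    (2, 1, [:: B; B; B; B; B], JAx 3 false false);
    (2, 6, [::], JAx 2 false false)]);
  ([:: B; B; B; B; B; Bi], [:: B; B; B; B], [:: (5, 1, [:: B; B; B; B; B], JAx 3 false false);
    (0, 6, [::], JAx 2 false false)]);
  ([:: B; B; B; B; B; Ci], [:: C; B], [:: (5, 1, [:: C; C], JAx 9 false false);
    (3, 3, [:: C; B; B], JAx 1 false false);
    (1, 3, [:: C; B; B], JAx 1 false false);
    (4, 3, [:: C; B; B], JAx 1 false false);
    (2, 3, [:: C; B; B], JAx 1 false false);
    (0, 2, [:: C; C; Bi], JTriv);
    (2, 1, [:: B; B; B; B; B], JAx 3 false false);
    (5, 3, [:: C; B; B], JAx 1 false false);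
    (6, 6, [::], JAx 2 false false);
    (3, 3, [:: C; B; B], JAx 1 false false);
    (2, 2, [:: C; C; Bi], JTriv);
    (4, 1, [:: B; B; B; B; B], JAx 3 false false);
    (1, 3, [::], JTriv);
    (1, 6, [::], JAx 2 false false)]);
  ([:: C; A], [:: C; C; B], [:: (1, 1, [:: C; B], JAx 4 false false)]);
  ([:: C; B], [:: C; B], [:: (1, 1, [:: B], JAx 5 false false)]);
  ([:: C; C], [:: C; C], [:: (0, 1, [:: C], JAx 6 false false)]);
  ([:: C; Ai], [:: C; C; B], [:: (1, 1, [:: C; B], JAx 7 false false)]);
  ([:: C; Bi], [:: C; B; B; B; B; B], [:: (1, 1, [:: B; B; B; B; B], JAx 3 false false)]);
  ([:: C; Ci], [::], [:: (1, 1, [:: C; C], JAx 9 false false);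
    (0, 3, [::], JTriv)]);
  ([:: C; B; A], [::], [:: (2, 1, [:: C; B], JAx 4 false false);
    (1, 2, [:: C; C; Bi], JTriv);
    (3, 1, [:: B; B; B; B; B], JAx 3 false false);
    (0, 3, [::], JTriv);
    (0, 6, [::], JAx 2 false false)]);
  ([:: C; B; B], [:: C; B; B], [:: (1, 1, [:: B], JAx 5 false false)]);
  ([:: C; B; C], [:: B; B; B; B; B], [:: (1, 2, [:: C; C; Bi], JTriv);
    (3, 1, [:: B; B; B; B; B], JAx 3 false false);
    (0, 3, [::], JTriv)]);
  ([:: C; B; Ai], [::], [:: (2, 1, [:: C; B], JAx 7 false false);
    (1, 2, [:: C; C; Bi], JTriv);
    (3, 1, [:: B; B; B; B; B], JAx 3 false false);
    (0, 3, [::], JTriv);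
    (0, 6, [::], JAx 2 false false)]);
  ([:: C; B; Bi], [:: C], [:: (2, 1, [:: B; B; B; B; B], JAx 3 false false);
    (1, 6, [::], JAx 2 false false)]);
  ([:: C; B; Ci], [:: C; C; B; B; B], [:: (2, 1, [:: C; C], JAx 9 false false);
    (1, 2, [:: C; C; Bi], JTriv);
    (3, 1, [:: B; B; B; B; B], JAx 3 false false);
    (0, 3, [::], JTriv);
    (3, 3, [:: C; B; B], JAx 1 false false);
    (1, 3, [:: C; B; B], JAx 1 false false);
    (0, 2, [:: C; C; Bi], JTriv);
    (2, 1, [:: B; B; B; B; B], JAx 3 false false);
    (2, 6, [::], JAx 2 false false)]);
  ([:: C; B; B; A], [:: C; C; B; B; B], [:: (3, 1, [:: C; B], JAx 4 false false);
    (1, 3, [:: C; B; B], JAx 1 false false)]);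
  ([:: C; B; B; B], [:: C; B; B; B], [:: (1, 1, [:: B], JAx 5 false false)]);
  ([:: C; B; B; C], [:: C; C; B; B], [:: (1, 3, [:: C; B; B], JAx 1 false false)]);
  ([:: C; B; B; Ai], [:: C; C; B; B; B], [:: (3, 1, [:: C; B], JAx 7 false false);
    (1, 3, [:: C; B; B], JAx 1 false false)]);
  ([:: C; B; B; Bi], [:: C; B], [:: (3, 1, [:: B; B; B; B; B], JAx 3 false false);
    (1, 6, [::], JAx 2 false false)]);
  ([:: C; B; B; Ci], [:: B; B], [:: (3, 1, [:: C; C], JAx 9 false false);
    (1, 3, [:: C; B; B], JAx 1 false false);
    (2, 3, [:: C; B; B], JAx 1 false false);
    (0, 3, [::], JTriv)]);
  ([:: C; B; B; B; A], [:: B; B], [:: (4, 1, [:: C; B], JAx 4 false false);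
    (2, 3, [:: C; B; B], JAx 1 false false);
    (1, 2, [:: C; C; Bi], JTriv);
    (3, 1, [:: B; B; B; B; B], JAx 3 false false);
    (0, 3, [::], JTriv);
    (0, 6, [::], JAx 2 false false)]);
  ([:: C; B; B; B; B], [:: C; B; B; B; B], [:: (1, 1, [:: B], JAx 5 false false)]);
  ([:: C; B; B; B; C], [:: B], [:: (2, 3, [:: C; B; B], JAx 1 false false);
    (1, 2, [:: C; C; Bi], JTriv);
    (3, 1, [:: B; B; B; B; B], JAx 3 false false);
    (0, 3, [::], JTriv);
    (0, 6, [::], JAx 2 false false)]);
  ([:: C; B; B; B; Ai], [:: B; B], [:: (4, 1, [:: C; B], JAx 7 false false);
    (2, 3, [:: C; B; B], JAx 1 false false);
    (1, 2, [:: C; C; Bi], JTriv);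
    (3, 1, [:: B; B; B; B; B], JAx 3 false false);
    (0, 3, [::], JTriv);
    (0, 6, [::], JAx 2 false false)]);
  ([:: C; B; B; B; Bi], [:: C; B; B], [:: (4, 1, [:: B; B; B; B; B], JAx 3 false false);
    (1, 6, [::], JAx 2 false false)]);
  ([:: C; B; B; B; Ci], [:: C; C; B; B; B; B; B], [:: (4, 1, [:: C; C], JAx 9 false false);
    (2, 3, [:: C; B; B], JAx 1 false false);
    (3, 3, [:: C; B; B], JAx 1 false false);
    (1, 2, [:: C; C; Bi], JTriv);
    (3, 1, [:: B; B; B; B; B], JAx 3 false false);
    (0, 3, [::], JTriv);
    (3, 3, [:: C; B; B], JAx 1 false false);
    (1, 3, [:: C; B; B], JAx 1 false false);
    (2, 6, [::], JAx 2 false false);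
    (0, 2, [:: C; C; Bi], JTriv);
    (2, 1, [:: B; B; B; B; B], JAx 3 false false)]);
  ([:: C; B; B; B; B; A], [:: C; C; B; B; B; B; B], [:: (5, 1, [:: C; B], JAx 4 false false);
    (3, 3, [:: C; B; B], JAx 1 false false);
    (1, 3, [:: C; B; B], JAx 1 false false)]);
  ([:: C; B; B; B; B; B], [:: C; B; B; B; B; B], [:: (1, 1, [:: B], JAx 5 false false)]);
  ([:: C; B; B; B; B; C], [:: C; C; B; B; B; B], [:: (3, 3, [:: C; B; B], JAx 1 false false);
    (1, 3, [:: C; B; B], JAx 1 false false)]);
  ([:: C; B; B; B; B; Ai], [:: C; C; B; B; B; B; B], [:: (5, 1, [:: C; B], JAx 7 false false);
    (3, 3, [:: C; B; B], JAx 1 false false);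
    (1, 3, [:: C; B; B], JAx 1 false false)]);
  ([:: C; B; B; B; B; Bi], [:: C; B; B; B], [:: (5, 1, [:: B; B; B; B; B], JAx 3 false false);
    (1, 6, [::], JAx 2 false false)]);
  ([:: C; B; B; B; B; Ci], [:: B; B; B; B], [:: (5, 1, [:: C; C], JAx 9 false false);
    (3, 3, [:: C; B; B], JAx 1 false false);
    (1, 3, [:: C; B; B], JAx 1 false false);
    (4, 3, [:: C; B; B], JAx 1 false false);
    (2, 3, [:: C; B; B], JAx 1 false false);
    (0, 3, [::], JTriv)]);
  ([:: C; B; B; B; B; B; A], [:: B; B; B; B], [:: (6, 1, [:: C; B], JAx 4 false false);
    (4, 3, [:: C; B; B], JAx 1 false false);
    (2, 3, [:: C; B; B], JAx 1 false false);
    (1, 2, [:: C; C; Bi], JTriv);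
    (3, 1, [:: B; B; B; B; B], JAx 3 false false);
    (0, 3, [::], JTriv);
    (0, 6, [::], JAx 2 false false)]);
  ([:: C; B; B; B; B; B; B], [:: C], [:: (1, 6, [::], JAx 2 false false)]);
  ([:: C; B; B; B; B; B; C], [:: B; B; B], [:: (4, 3, [:: C; B; B], JAx 1 false false);
    (2, 3, [:: C; B; B], JAx 1 false false);
    (1, 2, [:: C; C; Bi], JTriv);
    (3, 1, [:: B; B; B; B; B], JAx 3 false false);
    (0, 3, [::], JTriv);
    (0, 6, [::], JAx 2 false false)]);
  ([:: C; B; B; B; B; B; Ai], [:: B; B; B; B], [:: (6, 1, [:: C; B], JAx 7 false false);
    (4, 3, [:: C; B; B], JAx 1 false false);
    (2, 3, [:: C; B; B], JAx 1 false false);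
    (1, 2, [:: C; C; Bi], JTriv);
    (3, 1, [:: B; B; B; B; B], JAx 3 false false);
    (0, 3, [::], JTriv);
    (0, 6, [::], JAx 2 false false)]);
  ([:: C; B; B; B; B; B; Bi], [:: C; B; B; B; B], [:: (6, 1, [:: B; B; B; B; B], JAx 3 false false);
    (1, 6, [::], JAx 2 false false)]);
  ([:: C; B; B; B; B; B; Ci], [:: C; C; B], [:: (6, 1, [:: C; C], JAx 9 false false);
    (4, 3, [:: C; B; B], JAx 1 false false);
    (2, 3, [:: C; B; B], JAx 1 false false);
    (5, 3, [:: C; B; B], JAx 1 false false);
    (3, 3, [:: C; B; B], JAx 1 false false);
    (1, 2, [:: C; C; Bi], JTriv);
    (3, 1, [:: B; B; B; B; B], JAx 3 false false);
    (0, 3, [::], JTriv);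
    (3, 3, [:: C; B; B], JAx 1 false false);
    (4, 6, [::], JAx 2 false false);
    (1, 3, [:: C; B; B], JAx 1 false false);
    (0, 2, [:: C; C; Bi], JTriv);
    (2, 1, [:: B; B; B; B; B], JAx 3 false false);
    (2, 6, [::], JAx 2 false false)]);
  ([:: C; C; A], [:: B], [:: (2, 1, [:: C; B], JAx 4 false false);
    (0, 3, [::], JTriv)]);
  ([:: C; C; B], [:: C; C; B], [:: (2, 1, [:: B], JAx 5 false false)]);
  ([:: C; C; C], [::], [:: (0, 3, [::], JTriv)]);
  ([:: C; C; Ai], [:: B], [:: (2, 1, [:: C; B], JAx 7 false false);
    (0, 3, [::], JAx 78 false false)]);
  ([:: C; C; Bi], [:: C; C; B; B; B; B; B], [:: (2, 1, [:: B; B; B; B; B], JAx 3 false false)]);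
  ([:: C; C; Ci], [:: C], [:: (2, 1, [:: C; C], JAx 9 false false);
    (0, 3, [::], JAx 78 false false)]);
  ([:: C; C; B; A], [:: C], [:: (3, 1, [:: C; B], JAx 4 false false);
    (2, 2, [:: C; C; Bi], JTriv);
    (4, 1, [:: B; B; B; B; B], JAx 3 false false);
    (0, 3, [::], JAx 78 false false);
    (1, 6, [::], JAx 2 false false)]);
  ([:: C; C; B; B], [:: C; C; B; B], [:: (2, 1, [:: B], JAx 5 false false)]);
  ([:: C; C; B; C], [:: C; B; B; B; B; B], [:: (2, 2, [:: C; C; Bi], JTriv);
    (4, 1, [:: B; B; B; B; B], JAx 3 false false);
    (0, 3, [::], JAx 78 false false)]);
  ([:: C; C; B; Ai], [:: C], [:: (3, 1, [:: C; B], JAx 7 false false);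
    (2, 2, [:: C; C; Bi], JTriv);
    (4, 1, [:: B; B; B; B; B], JAx 3 false false);
    (0, 3, [::], JAx 78 false false);
    (1, 6, [::], JAx 2 false false)]);
  ([:: C; C; B; Bi], [:: C; C], [:: (3, 1, [:: B; B; B; B; B], JAx 3 false false);
    (2, 6, [::], JAx 2 false false)]);
  ([:: C; C; B; Ci], [:: B; B; B], [:: (3, 1, [:: C; C], JAx 9 false false);
    (2, 2, [:: C; C; Bi], JTriv);
    (4, 1, [:: B; B; B; B; B], JAx 3 false false);
    (0, 3, [::], JAx 78 false false);
    (4, 3, [:: C; B; B], JAx 1 false false);
    (2, 3, [:: C; B; B], JAx 1 false false);
    (1, 2, [:: C; C; Bi], JTriv);
    (3, 1, [:: B; B; B; B; B], JAx 3 false false);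
    (0, 3, [::], JAx 78 false false);
    (0, 6, [::], JAx 2 false false)]);
  ([:: C; C; B; B; A], [:: B; B; B], [:: (4, 1, [:: C; B], JAx 4 false false);
    (2, 3, [:: C; B; B], JAx 1 false false);
    (0, 3, [::], JAx 78 false false)]);
  ([:: C; C; B; B; B], [:: C; C; B; B; B], [:: (2, 1, [:: B], JAx 5 false false)]);
  ([:: C; C; B; B; C], [:: B; B], [:: (2, 3, [:: C; B; B], JAx 1 false false);
    (0, 3, [::], JAx 78 false false)]);
  ([:: C; C; B; B; Ai], [:: B; B; B], [:: (4, 1, [:: C; B], JAx 7 false false);
    (2, 3, [:: C; B; B], JAx 1 false false);
    (0, 3, [::], JAx 78 false false)]);
  ([:: C; C; B; B; Bi], [:: C; C; B], [:: (4, 1, [:: B; B; B; B; B], JAx 3 false false);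
    (2, 6, [::], JAx 2 false false)]);
  ([:: C; C; B; B; Ci], [:: C; B; B], [:: (4, 1, [:: C; C], JAx 9 false false);
    (2, 3, [:: C; B; B], JAx 1 false false);
    (0, 3, [::], JAx 78 false false);
    (0, 3, [:: C; B; B], JAx 1 false false)]);
  ([:: C; C; B; B; B; A], [:: C; B; B], [:: (5, 1, [:: C; B], JAx 4 false false);
    (3, 3, [:: C; B; B], JAx 1 false false);
    (2, 2, [:: C; C; Bi], JTriv);
    (4, 1, [:: B; B; B; B; B], JAx 3 false false);
    (0, 3, [::], JAx 78 false false);
    (1, 6, [::], JAx 2 false false)]);
  ([:: C; C; B; B; B; B], [:: C; C; B; B; B; B], [:: (2, 1, [:: B], JAx 5 false false)]);
  ([:: C; C; B; B; B; C], [:: C; B], [:: (3, 3, [:: C; B; B], JAx 1 false false);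
    (2, 2, [:: C; C; Bi], JTriv);
    (4, 1, [:: B; B; B; B; B], JAx 3 false false);
    (0, 3, [::], JAx 78 false false);
    (1, 6, [::], JAx 2 false false)]);
  ([:: C; C; B; B; B; Ai], [:: C; B; B], [:: (5, 1, [:: C; B], JAx 7 false false);
    (3, 3, [:: C; B; B], JAx 1 false false);
    (2, 2, [:: C; C; Bi], JTriv);
    (4, 1, [:: B; B; B; B; B], JAx 3 false false);
    (0, 3, [::], JAx 78 false false);
    (1, 6, [::], JAx 2 false false)]);
  ([:: C; C; B; B; B; Bi], [:: C; C; B; B], [:: (5, 1, [:: B; B; B; B; B], JAx 3 false false);
    (2, 6, [::], JAx 2 false false)]);
  ([:: C; C; B; B; B; Ci], [:: B; B; B; B; B], [:: (5, 1, [:: C; C], JAx 9 false false);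
    (3, 3, [:: C; B; B], JAx 1 false false);
    (4, 3, [:: C; B; B], JAx 1 false false);
    (2, 2, [:: C; C; Bi], JTriv);
    (4, 1, [:: B; B; B; B; B], JAx 3 false false);
    (0, 3, [::], JAx 78 false false);
    (4, 3, [:: C; B; B], JAx 1 false false);
    (2, 3, [:: C; B; B], JAx 1 false false);
    (3, 6, [::], JAx 2 false false);
    (1, 2, [:: C; C; Bi], JTriv);
    (3, 1, [:: B; B; B; B; B], JAx 3 false false);
    (0, 3, [::], JAx 78 false false)]);
  ([:: C; C; B; B; B; B; A], [:: B; B; B; B; B], [:: (6, 1, [:: C; B], JAx 4 false false);
    (4, 3, [:: C; B; B], JAx 1 false false);
    (2, 3, [:: C; B; B], JAx 1 false false);
    (0, 3, [::], JAx 78 false false)]);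
  ([:: C; C; B; B; B; B; B], [:: C; C; B; B; B; B; B], [:: (2, 1, [:: B], JAx 5 false false)]);
  ([:: C; C; B; B; B; B; C], [:: B; B; B; B], [:: (4, 3, [:: C; B; B], JAx 1 false false);
    (2, 3, [:: C; B; B], JAx 1 false false);
    (0, 3, [::], JAx 78 false false)]);
  ([:: C; C; B; B; B; B; Ai], [:: B; B; B; B; B], [:: (6, 1, [:: C; B], JAx 7 false false);
    (4, 3, [:: C; B; B], JAx 1 false false);
    (2, 3, [:: C; B; B], JAx 1 false false);
    (0, 3, [::], JAx 78 false false)]);
  ([:: C; C; B; B; B; B; Bi], [:: C; C; B; B; B], [:: (6, 1, [:: B; B; B; B; B], JAx 3 false false);
    (2, 6, [::], JAx 2 false false)]);
  ([:: C; C; B; B; B; B; Ci], [:: C; B; B; B; B], [:: (6, 1, [:: C; C], JAx 9 false false);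
    (4, 3, [:: C; B; B], JAx 1 false false);
    (2, 3, [:: C; B; B], JAx 1 false false);
    (0, 3, [::], JAx 78 false false);
    (2, 3, [:: C; B; B], JAx 1 false false);
    (0, 3, [:: C; B; B], JAx 1 false false)]);
  ([:: C; C; B; B; B; B; B; A], [:: C; B; B; B; B], [:: (7, 1, [:: C; B], JAx 4 false false);
    (5, 3, [:: C; B; B], JAx 1 false false);
    (3, 3, [:: C; B; B], JAx 1 false false);
    (2, 2, [:: C; C; Bi], JTriv);
    (4, 1, [:: B; B; B; B; B], JAx 3 false false);
    (0, 3, [::], JAx 78 false false);
    (1, 6, [::], JAx 2 false false)]);
  ([:: C; C; B; B; B; B; B; B], [:: C; C], [:: (2, 6, [::], JAx 2 false false)]);
  ([:: C; C; B; B; B; B; B; C], [:: C; B; B; B], [:: (5, 3, [:: C; B; B], JAx 1 false false);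
    (3, 3, [:: C; B; B], JAx 1 false false);
    (2, 2, [:: C; C; Bi], JTriv);
    (4, 1, [:: B; B; B; B; B], JAx 3 false false);
    (0, 3, [::], JAx 78 false false);
    (1, 6, [::], JAx 2 false false)]);
  ([:: C; C; B; B; B; B; B; Ai], [:: C; B; B; B; B], [:: (7, 1, [:: C; B], JAx 7 false false);
    (5, 3, [:: C; B; B], JAx 1 false false);
    (3, 3, [:: C; B; B], JAx 1 false false);
    (2, 2, [:: C; C; Bi], JTriv);
    (4, 1, [:: B; B; B; B; B], JAx 3 false false);
    (0, 3, [::], JAx 78 false false);
    (1, 6, [::], JAx 2 false false)]);
  ([:: C; C; B; B; B; B; B; Bi], [:: C; C; B; B; B; B], [:: (7, 1, [:: B; B; B; B; B], JAx 3 false false);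
    (2, 6, [::], JAx 2 false false)]);
  ([:: C; C; B; B; B; B; B; Ci], [:: B], [:: (7, 1, [:: C; C], JAx 9 false false);
    (5, 3, [:: C; B; B], JAx 1 false false);
    (3, 3, [:: C; B; B], JAx 1 false false);
    (6, 3, [:: C; B; B], JAx 1 false false);
    (4, 3, [:: C; B; B], JAx 1 false false);
    (2, 2, [:: C; C; Bi], JTriv);
    (4, 1, [:: B; B; B; B; B], JAx 3 false false);
    (0, 3, [::], JAx 78 false false);
    (4, 3, [:: C; B; B], JAx 1 false false);
    (5, 6, [::], JAx 2 false false);
    (2, 3, [:: C; B; B], JAx 1 false false);
    (1, 2, [:: C; C; Bi], JTriv);
    (3, 1, [:: B; B; B; B; B], JAx 3 false false);
    (0, 3, [::], JAx 78 false false);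
    (0, 6, [::], JAx 2 false false)])].

Definition lemsR : seq (word * word * seq stepT) := [::
  ([:: B; B; B; Ci], [:: Ci; B; B; B], [:: (3, 1, [:: C; C], JTriv);
    (0, 4, [:: C; B; B; B], JAx 0 false false);
    (1, 4, [:: C; B; B; B], JAx 0 false false);
    (0, 2, [:: Ci], JTriv)]);
  ([:: Bi; Ci; Bi; C], [:: Ci; Bi; C; Bi], [:: (1, 0, [:: Bi; Bi; Bi; Bi; Bi; Bi; Bi; Bi; Bi; Bi; Bi; Bi; Bi; Bi; Bi; Bi; Bi; B; B; B; B; B; B; B; B; B; B; B; B; B; B; B; B; B; B; Bi], JTriv);
    (33, 4, [:: Bi; B; B; B], JTriv);
    (34, 4, [:: Ci; B; B; B], JAx 1 false false);
    (30, 4, [:: Bi; B; B; B], JTriv);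
    (31, 4, [:: Ci; B; B; B], JAx 1 false false);
    (27, 4, [:: Bi; B; B; B], JTriv);
    (28, 4, [:: Ci; B; B; B], JAx 1 false false);
    (26, 13, [:: Ci; B; B; B; B; B; B; B; B], JTriv);
    (18, 18, [:: Ci; B; B; B; B; B; B; B; B; C; B; B; B; B; B; B; B; B], JTriv);
    (27, 9, [:: B; Bi; C; B; B; B; B; B; B; B; B; B; Bi], JTriv);
    (18, 4, [:: B; B; B; Ci], JAx 1 true false);
    (21, 4, [:: B; B; B; Ci], JAx 1 true false);
    (24, 4, [:: B; B; B; Ci], JAx 1 true false);
    (29, 4, [:: B; B; B; C], JAx 0 true false);
    (32, 4, [:: B; B; B; C], JAx 0 true false);
    (35, 4, [:: B; B; B; C], JAx 0 true false);
    (28, 4, [:: B; B; B; Bi], JTriv);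
    (31, 4, [:: B; B; B; Bi], JTriv);
    (34, 4, [:: B; B; B; Bi], JTriv);
    (27, 4, [:: B; B; B; Ci], JAx 1 true false);
    (30, 4, [:: B; B; B; Ci], JAx 1 true false);
    (33, 4, [:: B; B; B; Ci], JAx 1 true false);
    (0, 36, [::], JTriv)]);
  ([:: Bi; C; Bi], [::], [:: (0, 0, [:: C; Ci], JTriv);
    (1, 4, [:: Bi; Ci; Bi; C], JAx 2 true false);
    (0, 5, [::], JTriv)]);
  ([:: C], [:: B; B], [:: (0, 1, [:: B; Bi; C; Bi; B], JTriv);
    (1, 3, [::], JAx 3 false false)]);
  ([:: Bi; Bi; Ci; B; B; C], [::], [:: (3, 2, [:: C], JAx 4 true false);
    (2, 2, [::], JTriv);
    (0, 2, [:: Ci], JAx 4 true true);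
    (0, 2, [::], JTriv)])].

Definition reps : seq word := [:: [::]; [:: B]; [:: B; B]; [:: B; B; B]; [:: B; B; B; B]; [:: B; B; B; B; B]; [:: C]; [:: C; B]; [:: C; B; B]; [:: C; B; B; B]; [:: C; B; B; B; B]; [:: C; B; B; B; B; B]; [:: C; C]; [:: C; C; B]; [:: C; C; B; B]; [:: C; C; B; B; B]; [:: C; C; B; B; B; B]; [:: C; C; B; B; B; B; B]].

Definition ax0H : seq (word * word) := [:: (kk, [::])].
Definition axH : seq (word * word) := odflt [::] (check_lemmas ax0H lemsH).

Lemma valid_nil P : normalP P -> valid P [::].
Proof. by move=> nP n; rewrite nth_nil; exact (cg_refl nP _). Qed.

Lemma valid0H : valid inH ax0H.
Proof.
case=> [|n] /=; first by rewrite /cgP cats0; exact: inH_k.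
rewrite nth_nil; exact (cg_refl normal_inH _).
Qed.

Lemma validH : valid inH axH.
Proof.
rewrite /axH; case E: (check_lemmas ax0H lemsH) => [ax|] /=.
  exact (check_lemmas_sound normal_inH valid0H E).
exact: valid_nil normal_inH.
Qed.

Lemma trans_all : all (fun r => all (fun s =>
    has (fun p => (p.1 == r ++ [:: s]) && (p.2 \in reps)) axH) gens6) reps.
Proof. by vm_compute. Qed.

Lemma nil_in_reps : [::] \in reps. Proof. by vm_compute. Qed.

Lemma fin_index : finite_index inH.
Proof.
exists reps => w; elim/last_ind: w => [|w s [r [Hr Hc]]].
  exists [::]; split; first exact: (proj2 (In_mem _ _) nil_in_reps).
  exact: (nP_nil normal_inH).
have rR : r \in reps := proj1 (In_mem _ _) Hr.
move/allP: trans_all => /(_ r rR) /allP /(_ s (mem_gens6 s)) /hasP [p pax /andP [/eqP E1 E2]].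
exists p.2; split; first exact: (proj2 (In_mem _ _) E2).
have H1 : cgP inH (rcons w s) (r ++ [:: s]).
  have := cg_ctx normal_inH [::] [:: s] Hc.
  by rewrite /= !cats1.
have H2 := valid_mem validH pax; rewrite E1 in H2.
exact (cg_trans normal_inH H1 H2).
Qed.

Definition b8 : word := nseq 8 B.
Definition tau' : word := [:: A; B; C; C].
Definition Lrb : seq (word * bool) :=
  [:: (conj_word kk tau', false); (conj_word kk tau', false);
      (conj_word kk (b8 ++ tau'), true); (conj_word kk (b8 ++ tau'), true)].
Definition rb : word := flatten (map fpair Lrb).

Lemma inH_rb : inH rb.
Proof.
exists Lrb; split=> //.
move=> p; rewrite /Lrb /= => -[<-|[<-|[<-|[<-|[]]]]]; eexists; reflexivity.
Qed.

Lemma realb_rb : realb rb x0. Proof. by vm_compute. Qed.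

Definition q0 : word := [:: B; B; B; C; Bi; Bi; Bi; Ci].
Lemma q0_triv : triv_word (conj_word (step rb x0).2 [:: C; C] ++ inv_word q0).
Proof. by vm_compute. Qed.

Lemma R0_q0 : R0 q0.
Proof.
have R : R0 (step rb x0).2 by exists rb; split; [exact: inH_rb | exact: realb_sound realb_rb].
have := nP_conj normal_R0 [:: C; C] R.
exact: (nP_eq normal_R0 (triv_act_eq q0_triv)).
Qed.

Definition ax0R : seq (word * word) := [:: ([:: B; B; B; C], [:: C; B; B; B])].
Definition axR : seq (word * word) := odflt [::] (check_lemmas ax0R lemsR).

Lemma valid0R : valid R0 ax0R.
Proof.
case=> [|n] /=; first exact: R0_q0.
rewrite nth_nil; exact (cg_refl normal_R0 _).
Qed.

Lemma validR : valid R0 axR.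
Proof.
rewrite /axR; case E: (check_lemmas ax0R lemsR) => [ax|] /=.
  exact (check_lemmas_sound normal_R0 valid0R E).
exact: valid_nil normal_R0.
Qed.

Lemma kk_in_axR : (kk, [::]) \in axR. Proof. by vm_compute. Qed.

Lemma R0_kk : R0 kk.
Proof.
have := valid_mem validR kk_in_axR.
exact: cg_P.
Qed.

Theorem proposition11p6 : regular_branch_over inH.
Proof.
split; first exact: fin_index.
exact: branch_part R0_kk.
Qed.
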